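(* Let $m$ be a positive integer, let $\mathcal{N}_r$ be the gadget of size $m$, and let $\pi$ be an $\mathcal{H}^{(\ast)}$-partition of $\mathcal{N}_r$. Then either for each $i\in\{0,1,\dots,m\}$ there exists $L_i\in\pi$ such that the Hamiltonian path of $\mathcal{N}_r[L_i]$ is a subsequence of $\swarrow_r^{i}=(r_{i,0},r_{i,1},\dots,r_{i,m})$, or for each $i\in\{0,1,\dots,m\}$ there exists $R_i\in\pi$ such that the Hamiltonian path of $\mathcal{N}_r[R_i]$ is a subsequence of $\searrow_r^{i}=(r_{0,i},r_{1,i},\dots,r_{m,i})$.
   Context: The gadget $\mathcal{N}_r=\langle\mathcal{V}_r,\mathcal{E}_r\rangle$ of size $m$ has vertex set $\mathcal{V}_r=\{r_{i,j}:0\le i,j\le m\}$ and arc set $\mathcal{E}_r=\swarrow_r\cup\searrow_r$, where $\swarrow_r=\{\langle r_{i,j},r_{i,j+1}\rangle:0\le i\le m,\ 0\le j<m\}$ and $\searrow_r=\{\langle r_{i,j},r_{i+1,j}\rangle:0\le i<m,\ 0\le j\le m\}$; it is a DAG. For a digraph $G$ and a subset $V_1$ of its vertices, $G[V_1]$ is the induced subgraph. A partition $\pi$ of the vertex set of a DAG $G$ is an $\mathcal{H}^{(\ast)}$-partition if every induced subgraph $G[P]$, $P\in\pi$, has a directed Hamiltonian path (unique in a DAG) and the quotient digraph $G/\pi$ (vertex set $\pi$, arc $\langle P,Q\rangle$ for $P\ne Q$ whenever some arc of $G$ goes from $P$ to $Q$) is acyclic. *)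

(* Defs.v *)
From mathcomp Require Import all_boot.
Set Implicit Arguments. Unset Strict Implicit. Unset Printing Implicit Defensive.

(* Vertex r_{i,j} of the gadget N_r of size m is the pair (i, j),
   0 <= i, j <= m. *)
Definition gvert (m : nat) : finType := ('I_m.+1 * 'I_m.+1)%type.

Definition sw_arc (m : nat) : rel (gvert m) :=
  fun x y => (x.1 == y.1) && (val y.2 == (val x.2).+1).
Definition se_arc (m : nat) : rel (gvert m) :=
  fun x y => (x.2 == y.2) && (val y.1 == (val x.1).+1).
Definition garc (m : nat) : rel (gvert m) :=
  fun x y => sw_arc x y || se_arc x y.

(* s is a directed Hamiltonian path of the induced subgraph G[P]:
   it lists every vertex of P exactly once and consecutive vertices
   are joined by an arc of G (arcs of G[P] are the arcs of G between
   vertices of P). *)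
Definition ham_path (T : finType) (e : rel T) (P : {set T}) (s : seq T) :=
  [/\ uniq s, (forall x, (x \in s) = (x \in P)) & sorted e s].

Definition quot_arc (T : finType) (e : rel T) (pi : {set {set T}}) :
    rel {set T} :=
  fun P Q => [&& P \in pi, Q \in pi, P != Q &
              [exists x in P, exists y in Q, e x y]].

Definition acyclic_rel (T : eqType) (r : rel T) :=
  forall s : seq T, s != [::] -> ~~ cycle r s.

Definition Hstar_partition (T : finType) (e : rel T) (pi : {set {set T}}) :=
  [/\ partition pi [set: T],
      (forall P, P \in pi -> exists s, ham_path e P s)
    & acyclic_rel (quot_arc e pi)].

Definition sw_seq (m : nat) (i : 'I_m.+1) : seq (gvert m) :=
  [seq ((i, j) : gvert m) | j <- enum 'I_m.+1].
Definition se_seq (m : nat) (i : 'I_m.+1) : seq (gvert m) :=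
  [seq ((j, i) : gvert m) | j <- enum 'I_m.+1].

(* Main.v *)
Require Import Defs.
From mathcomp Require Import all_boot.
From mathcomp Require Import zify.
From Stdlib Require Import Classical.
Set Implicit Arguments. Unset Strict Implicit. Unset Printing Implicit Defensive.

Definition gsum m (x : gvert m) : nat := val x.1 + val x.2.

Lemma garc_sum m (x y : gvert m) : garc x y -> gsum y = (gsum x).+1.
Proof.
rewrite /garc /sw_arc /se_arc /gsum => /orP[/andP[/eqP-> /eqP->]|/andP[/eqP-> /eqP->]]; lia.
Qed.

Lemma pairwise_key_inj (T : eqType) (f : T -> nat) (s : seq T) x y :
  pairwise (relpre f ltn) s -> x \in s -> y \in s -> f x = f y -> x = y.
Proof.
elim: s => //= a t IH /andP[/allP Ha Ht].
rewrite !inE => /orP[/eqP->|xt] /orP[/eqP->|yt] // E.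
- by have := Ha _ yt; rewrite /= E ltnn.
- by have := Ha _ xt; rewrite /= E ltnn.
- exact: IH.
Qed.

Lemma sorted_garc_pw m (s : seq (gvert m)) :
  sorted (@garc m) s -> pairwise (relpre (@gsum m) ltn) s.
Proof.
move=> H; rewrite -sorted_pairwise; last by move=> b a c /=; apply: ltn_trans.
by apply: sub_sorted H => a b /garc_sum /= ->.
Qed.

Lemma cycle2 m (pi : {set {set gvert m}}) P C x y u v :
  Hstar_partition (@garc m) pi -> P \in pi -> C \in pi -> P != C ->
  x \in P -> y \in C -> garc x y -> u \in C -> v \in P -> garc u v -> False.
Proof.
case=> _ _ Hac PI CI PC xP yC xy uC vP uv.
have := Hac [:: P; C] isT; rewrite /= /quot_arc PI CI PC (eq_sym C) PC /= andbT.
have -> : [exists x in P, exists y in C, garc x y].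
  by apply/existsP; exists x; rewrite xP; apply/existsP; exists y; rewrite yC.
have -> // : [exists x in C, exists y in P, garc x y].
  by apply/existsP; exists u; rewrite uC; apply/existsP; exists v; rewrite vP.
Qed.

Lemma block_inj m pi P (x y : gvert m) : Hstar_partition (@garc m) pi ->
  P \in pi -> x \in P -> y \in P -> gsum x = gsum y -> x = y.
Proof.
move=> H PI; case: (H) => _ Hh _; case: (Hh P PI) => s [_ Hs Hsort].
rewrite -!Hs => xs ys; exact: pairwise_key_inj (sorted_garc_pw Hsort) xs ys.
Qed.

Lemma block_of m pi (w : gvert m) : Hstar_partition (@garc m) pi ->
  exists2 C, C \in pi & w \in C.
Proof.
case=> /and3P[/eqP Hc _ _] _ _.
have : w \in cover pi by rewrite Hc inE.
by move/bigcupP=> [C CI wC]; exists C.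
Qed.

Lemma no_turn1 m pi P (x y z : gvert m) : Hstar_partition (@garc m) pi -> P \in pi ->
  x \in P -> y \in P -> z \in P -> sw_arc x y -> se_arc y z -> False.
Proof.
move=> H PI xP yP zP.
rewrite /sw_arc /se_arc => /andP[/eqP e1 /eqP e2] /andP[/eqP e3 /eqP e4].
pose w : gvert m := (z.1, x.2).
have [C CI wC] := block_of w H.
have wP : w \notin P.
  apply/negP => wP.
  have E : gsum w = gsum y by rewrite /gsum /= e4 e2 addSn addnS.
  have := block_inj H PI wP yP E => /(congr1 (fun v : gvert m => val v.1)) /=.
  rewrite e4 => h; exact: (n_Sn _ (esym h)).
have CP : P != C by apply/eqP => PC; move: wP; rewrite PC wC.
apply: (cycle2 H PI CI CP xP wC _ wC zP).
- by rewrite /garc /se_arc /= eqxx e4 e1 eqxx orbT.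
- by rewrite /garc /sw_arc /= eqxx -e3 e2 eqxx.
Qed.

Lemma no_turn2 m pi P (x y z : gvert m) : Hstar_partition (@garc m) pi -> P \in pi ->
  x \in P -> y \in P -> z \in P -> se_arc x y -> sw_arc y z -> False.
Proof.
move=> H PI xP yP zP.
rewrite /sw_arc /se_arc => /andP[/eqP e1 /eqP e2] /andP[/eqP e3 /eqP e4].
pose w : gvert m := (x.1, z.2).
have [C CI wC] := block_of w H.
have wP : w \notin P.
  apply/negP => wP.
  have E : gsum w = gsum y by rewrite /gsum /= e4 e2 addSn addnS.
  have := block_inj H PI wP yP E => /(congr1 (fun v : gvert m => val v.2)) /=.
  rewrite e4 => h; exact: (n_Sn _ (esym h)).
have CP : P != C by apply/eqP => PC; move: wP; rewrite PC wC.
apply: (cycle2 H PI CI CP xP wC _ wC zP).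
- by rewrite /garc /sw_arc /= eqxx e4 e1 eqxx.
- by rewrite /garc /se_arc /= eqxx -e3 e2 eqxx orbT.
Qed.

Lemma straight m pi P (x : gvert m) s : Hstar_partition (@garc m) pi -> P \in pi ->
  x \in P -> {subset s <= P} -> path (@garc m) x s ->
  path (@sw_arc m) x s \/ path (@se_arc m) x s.
Proof.
move=> H PI; elim: s x => [|y t IH] x xP sP /=; first by left.
case/andP => xy pt.
have yP : y \in P by apply: sP; rewrite inE eqxx.
have tP : {subset t <= P} by move=> v vt; apply: sP; rewrite inE vt orbT.
case: (IH y yP tP pt) => [swt|set].
- case/orP: xy => [sxy|sexy]; first by left; rewrite sxy.
  clear IH pt tP; move: swt sP; case: t => [|z t'] /= swt sP.
    by right; rewrite sexy.
  case/andP: swt => syz _; exfalso.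
  have zP : z \in P by apply: sP; rewrite !inE eqxx !orbT.
  exact: (no_turn2 H PI xP yP zP sexy syz).
- case/orP: xy => [sxy|sexy]; last by right; rewrite sexy.
  clear IH pt tP; move: set sP; case: t => [|z t'] /= set sP.
    by left; rewrite sxy.
  case/andP: set => syz _; exfalso.
  have zP : z \in P by apply: sP; rewrite !inE eqxx !orbT.
  exact: (no_turn1 H PI xP yP zP sxy syz).
Qed.

Lemma path_sw_row m (x : gvert m) s : path (@sw_arc m) x s ->
  forall v, v \in x :: s -> v.1 = x.1.
Proof.
elim: s x => [|y t IH] x /=; first by move=> _ v; rewrite inE => /eqP e; rewrite e.
move=> /andP[/andP[/eqP e _] p] v; rewrite inE => /orP[/eqP e'|vt]; first by rewrite e'.
by rewrite e; apply: (IH _ p v vt).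
Qed.

Lemma path_se_col m (x : gvert m) s : path (@se_arc m) x s ->
  forall v, v \in x :: s -> v.2 = x.2.
Proof.
elim: s x => [|y t IH] x /=; first by move=> _ v; rewrite inE => /eqP e; rewrite e.
move=> /andP[/andP[/eqP e _] p] v; rewrite inE => /orP[/eqP e'|vt]; first by rewrite e'.
by rewrite e; apply: (IH _ p v vt).
Qed.

Lemma subseq_key (T : eqType) (f : T -> nat) (s t : seq T) :
  sorted (relpre f ltn) s -> sorted (relpre f ltn) t -> {subset s <= t} ->
  subseq s t.
Proof.
move=> ss st sub.
have tr : transitive (relpre f ltn) by move=> b a c /=; apply: ltn_trans.
have irr : irreflexive (relpre f ltn) by move=> a /=; rewrite ltnn.
apply/subseq_uniqP; first exact: sorted_uniq st.
apply: (irr_sorted_eq tr irr ss); first exact: sorted_filter.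
by move=> v; rewrite mem_filter; case vs: (v \in s) => //=; rewrite (sub v vs).
Qed.

Lemma enum_sorted n : sorted (relpre val ltn) (enum 'I_n).
Proof. by rewrite -sorted_map val_enum_ord iota_ltn_sorted. Qed.

Lemma row_sub m (x : gvert m) t : path (@sw_arc m) x t ->
  subseq (x :: t) (sw_seq x.1).
Proof.
move=> p; apply: (@subseq_key _ (fun v : gvert m => val v.2)).
- by apply: sub_path p => a b /andP[_ /eqP /= ->].
- by rewrite /sw_seq sorted_map; apply: sub_sorted (enum_sorted m.+1) => a b.
- move=> v vs; have := path_sw_row p vs; case: v vs => a b vs /= ->.
  by apply/mapP; exists b => //; rewrite mem_enum.
Qed.

Lemma col_sub m (x : gvert m) t : path (@se_arc m) x t ->
  subseq (x :: t) (se_seq x.2).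
Proof.
move=> p; apply: (@subseq_key _ (fun v : gvert m => val v.1)).
- by apply: sub_path p => a b /andP[_ /eqP /= ->].
- by rewrite /se_seq sorted_map; apply: sub_sorted (enum_sorted m.+1) => a b.
- move=> v vs; have := path_se_col p vs; case: v vs => a b vs /= ->.
  by apply/mapP; exists a => //; rewrite mem_enum.
Qed.

Theorem lemma5p3 (m : nat) (hm : 0 < m) (pi : {set {set gvert m}}) :
  Hstar_partition (@garc m) pi ->
  (forall i : 'I_m.+1, exists2 L, L \in pi &
     exists s, ham_path (@garc m) L s /\ subseq s (sw_seq i)) \/
  (forall i : 'I_m.+1, exists2 R, R \in pi &
     exists s, ham_path (@garc m) R s /\ subseq s (se_seq i)).
Proof.
move=> H.
case: (classic (forall i : 'I_m.+1, exists2 L, L \in pi &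
     exists s, ham_path (@garc m) L s /\ subseq s (sw_seq i))) => [hl|hn].
  by left.
right => j.
have [i0 Hi0] := not_all_ex_not _ _ hn.
have [C CI vC] := block_of ((i0, j) : gvert m) H.
case: (H) => _ Hh _; have [s [us Hs ss]] := Hh C CI.
have vs : ((i0, j) : gvert m) \in s by rewrite Hs.
case: s us Hs ss vs => [|x t] // us Hs ss vs.
have xP : x \in C by rewrite -Hs inE eqxx.
have tP : {subset t <= C} by move=> v vt; rewrite -Hs inE vt orbT.
case: (straight H CI xP tP ss) => [sw|se].
- exfalso; apply: Hi0; exists C => //; exists (x :: t); split; first by split.
  have := path_sw_row sw vs => /= ->; exact: row_sub sw.
- exists C => //; exists (x :: t); split; first by split.
  have := path_se_col se vs => /= ->; exact: col_sub se.
Qed.
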